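(* Let $G$ be a (not necessarily connected) graph on $n\ge1$ vertices with adjacency matrix $A$, let $m\ge1$, and let $\alpha\in\mathrm{ev}(A)\setminus\{0,-m,-2m\}$. Then there exist $\mu\in\mathbb{R}$, $f\in\mathbb{R}^m$, $g\in\mathbb{R}^n$ with \[ (J_m+\alpha I)f=\tfrac{\mu}{2}\mathbf 1,\quad (A-J_n-\alpha I)g=-\tfrac{\mu}{2}\mathbf 1,\quad \langle f,f\rangle+\langle g,g\rangle=1,\quad \langle\mathbf 1,f\rangle+\langle\mathbf 1,g\rangle=0 \] if and only if there is a vector $g\in\mathbb{R}^n$ with $Ag=\alpha g$, $\langle g,g\rangle=1$ and $\langle\mathbf 1,g\rangle=0$.
   Context: $\mathrm{ev}(A)$ is the set of eigenvalues of $A$; $J_k$ the $k\times k$ all-ones matrix; $\mathbf 1$ the all-ones vector of the appropriate size; $I$ the identity. *)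

(* Defs.v *)
From mathcomp Require Import all_boot all_order all_algebra.
From mathcomp Require Import reals.
Set Implicit Arguments. Unset Strict Implicit. Unset Printing Implicit Defensive.
Import Order.TTheory GRing.Theory Num.Theory.
Local Open Scope ring_scope.

Definition simple_graph (n : nat) (adj : rel 'I_n) : Prop :=
  (forall i j, adj i j = adj j i) /\ (forall i, ~~ adj i i).

Definition adjmx (R : nzRingType) (n : nat) (adj : rel 'I_n) : 'M[R]_n :=
  \matrix_(i, j) (adj i j)%:R.

Definition Jmx (R : nzRingType) (k : nat) : 'M[R]_k := const_mx 1.
Definition ones (R : nzRingType) (k : nat) : 'cV[R]_k := const_mx 1.

Definition dotv (R : nzRingType) (k : nat) (u v : 'cV[R]_k) : R := (u^T *m v) 0 0.

(* Main.v *)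
Require Import Defs.
From mathcomp Require Import all_boot all_order all_algebra.
From mathcomp Require Import reals.
From mathcomp Require Import ring.
Import Order.TTheory GRing.Theory Num.Theory.
Local Open Scope ring_scope.

Section H.
Variable R : realType.

Lemma dotvE k (u v : 'cV[R]_k) : dotv u v = \sum_i u i 0 * v i 0.
Proof. by rewrite /dotv mxE; apply: eq_bigr => i _; rewrite mxE. Qed.

Lemma dotvC k (u v : 'cV[R]_k) : dotv u v = dotv v u.
Proof. by rewrite !dotvE; apply: eq_bigr => i _; rewrite mulrC. Qed.

Lemma dotvZr k a (u v : 'cV[R]_k) : dotv u (a *: v) = a * dotv u v.
Proof. by rewrite !dotvE mulr_sumr; apply: eq_bigr => i _; rewrite mxE mulrCA. Qed.

Lemma dotvDr k (u v w : 'cV[R]_k) : dotv u (v + w) = dotv u v + dotv u w.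
Proof. by rewrite !dotvE -big_split; apply: eq_bigr => i _; rewrite mxE mulrDr. Qed.

Lemma dotvNr k (u v : 'cV[R]_k) : dotv u (- v) = - dotv u v.
Proof. by rewrite -scaleN1r dotvZr mulN1r. Qed.

Lemma dotv0r k (u : 'cV[R]_k) : dotv u 0 = 0.
Proof. by rewrite dotvE big1 // => i _; rewrite mxE mulr0. Qed.

Lemma dotv_ones k : dotv (ones R k) (ones R k) = k%:R.
Proof.
rewrite dotvE (eq_bigr (fun _ => 1)); last by move=> i _; rewrite !mxE mulr1.
by rewrite sumr_const card_ord.
Qed.

Lemma Jmul k (f : 'cV[R]_k) : Jmx R k *m f = dotv (ones R k) f *: ones R k.
Proof.
apply/matrixP => i j; rewrite !mxE dotvE mulr1 (ord1 j).
by apply: eq_bigr => l _; rewrite !mxE.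
Qed.

Lemma dotv_gt0 k (v : 'cV[R]_k) : v != 0 -> 0 < dotv v v.
Proof.
move=> nz; rewrite dotvE.
have [i Hi] : exists i, v i 0 != 0.
  apply/existsP; apply: contraR nz; rewrite negb_exists => /forallP H.
  apply/eqP/matrixP => a b; rewrite (ord1 b) mxE; move: (H a); by rewrite negbK => /eqP.
rewrite (bigD1 i) //=; apply: ltr_pwDl; first by rewrite -expr2 lt_def sqr_ge0 sqrf_eq0 Hi.
by apply: sumr_ge0 => l _; rewrite -expr2 sqr_ge0.
Qed.

Lemma adj_sym n (adj : rel 'I_n) : simple_graph adj -> (adjmx R adj)^T = adjmx R adj.
Proof. by case=> Hs _; apply/matrixP => i j; rewrite !mxE Hs. Qed.

End H.
Lemma zmodaux (V : zmodType) (x y z : V) : x - y = z + (x - z - y).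
Proof. by rewrite addrAC addrCA subrr addr0. Qed.


Theorem lemma3p6 (R : realType) (n m : nat) (adj : rel 'I_n) (alpha : R) :
  simple_graph adj -> (1 <= n)%N -> (1 <= m)%N ->
  eigenvalue (adjmx R adj) alpha ->
  alpha != 0 -> alpha != - m%:R -> alpha != - (2 * m)%:R ->
  (exists (mu : R) (f : 'cV[R]_m) (g : 'cV[R]_n),
      (Jmx R m + alpha%:M) *m f = (mu / 2) *: ones R m /\
      (adjmx R adj - Jmx R n - alpha%:M) *m g = - (mu / 2) *: ones R n /\
      dotv f f + dotv g g = 1 /\
      dotv (ones R m) f + dotv (ones R n) g = 0)
  <->
  (exists g : 'cV[R]_n,
      adjmx R adj *m g = alpha *: g /\ dotv g g = 1 /\ dotv (ones R n) g = 0).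
Proof.
move=> Hg Hn Hm /eigenvalueP [v Hv vnz] a0 am a2m.
set A := adjmx R adj.
have AT : A^T = A by exact: adj_sym.
have HA : A *m v^T = alpha *: v^T.
  by rewrite -{1}AT -trmx_mul Hv linearZ.
split; last first.
  case=> g [Hg1 [Hg2 Hg3]]; exists 0, 0, g; split.
    by rewrite mulmx0 mul0r scale0r.
  split.
    by rewrite !mulmxBl Jmul Hg3 mul_scalar_mx Hg1 mul0r oppr0 !scale0r subr0 subrr.
  by split; rewrite dotv0r add0r.
case: (eqVneq (dotv (ones R n) v^T) 0) => [v0 | v1].
  have vT0 : v^T != 0 by rewrite trmx_eq0.
  have dp := @dotv_gt0 R _ _ vT0.
  move=> _; exists ((Num.sqrt (dotv v^T v^T))^-1 *: v^T); split.
    by rewrite -scalemxAr HA !scalerA mulrC.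
  split; last by rewrite dotvZr v0 mulr0.
  rewrite dotvZr dotvC dotvZr mulrA -expr2 exprVn sqr_sqrtr ?mulVf //.
    by rewrite gt_eqF.
  by rewrite ltW.
case=> mu [f [g [H1 [H2 [H3 H4]]]]].
set s := dotv (ones R m) f.
set t := dotv (ones R n) g.
have Hf : alpha *: f = (mu / 2 - s) *: ones R m.
  by rewrite scalerBl -H1 mulmxDl Jmul mul_scalar_mx addrAC subrr add0r.
have Hf' : f = (alpha^-1 * (mu / 2 - s)) *: ones R m.
  by rewrite -scalerA -Hf scalerA mulVf // scale1r.
have Hs : s = alpha^-1 * (mu / 2 - s) * m%:R.
  by rewrite {1}/s {1}Hf' dotvZr dotv_ones.
have HAg : A *m g - alpha *: g = (t - mu / 2) *: ones R n.
  move: H2; rewrite !mulmxBl Jmul mul_scalar_mx -/t => H2.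
  by rewrite scalerBl -scaleNr -H2; apply: zmodaux.
have Hvv : dotv v^T (A *m g - alpha *: g) = 0.
  rewrite /dotv trmxK mulmxBr mulmxA Hv.
  by rewrite -scalemxAl -scalemxAr subrr mxE.
rewrite dotvC in v1.
have Ht : t = mu / 2.
  move: Hvv; rewrite HAg dotvZr => /eqP; rewrite mulf_eq0 (negbTE v1) orbF subr_eq0.
  by move/eqP.
have Hmu : mu / 2 = - s.
  by rewrite -Ht; apply/eqP; rewrite -addr_eq0 addrC H4.
have E : s * (alpha + (2 * m)%:R) = 0.
  rewrite mulrDr {1}Hs Hmu natrM; move: (s) a0 => x a0'; field; exact: a0'.
have Hs0 : s = 0.
  move/eqP: E; rewrite mulf_eq0 => /orP [/eqP//|].
  by rewrite addr_eq0 (negbTE a2m).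
have f0 : f = 0.
  by rewrite Hf' Hmu Hs0 !oppr0 addr0 mulr0 scale0r.
exists g; split.
  by apply/eqP; rewrite -subr_eq0 HAg Ht subrr scale0r.
split; first by rewrite -H3 f0 dotv0r add0r.
by rewrite -/t Ht Hmu Hs0 oppr0.
Qed.
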